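(* For any unit square graph $G$, if $\mathcal{B}=\{N[v]\mid v\in V(G)\}$, then NCTD$^+(\mathcal{B})\le 4$.
   Context: A unit square graph is the intersection graph of a finite family of axis-parallel unit squares in the plane. $N[v]$ is the closed neighborhood of $v$. A positive teaching map for $\mathcal{B}$ assigns to each $B\in\mathcal{B}$ a set $T(B)\subseteq B$. A vertex $w$ distinguishes $B,B'$ if $w$ lies in exactly one of them. $T$ is non-clashing if for all distinct $B,B'\in\mathcal{B}$ some $w\in T(B)\cup T(B')$ distinguishes them; its size is $\max_{B\in\mathcal{B}}|T(B)|$. NCTD$^+(\mathcal{B})$ is the minimum size of a positive non-clashing teaching map for $\mathcal{B}$. *)

(* Defs.v *)
From mathcomp Require Import all_boot all_order all_algebra.
From mathcomp Require Import boolp reals.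
Set Implicit Arguments. Unset Strict Implicit. Unset Printing Implicit Defensive.
Import Order.TTheory GRing.Theory Num.Theory.
Local Open Scope ring_scope.

(* A unit square graph: vertex set V (a finite type), each vertex v is the
   closed axis-parallel unit square with center c v = (x, y), i.e.
   [x - 1/2, x + 1/2] x [y - 1/2, y + 1/2]. *)
Definition unit_square (R : realType) (p : R * R) (q : R * R) : Prop :=
  p.1 - 1/2 <= q.1 <= p.1 + 1/2 /\ p.2 - 1/2 <= q.2 <= p.2 + 1/2.

Definition usq_adj (R : realType) (V : finType) (c : V -> R * R) (u v : V) : Prop :=
  u <> v /\ exists q : R * R, unit_square (c u) q /\ unit_square (c v) q.

Definition closed_nbhd (R : realType) (V : finType) (c : V -> R * R) (v : V) : {set V} :=
  [set u | `[< u = v \/ usq_adj c u v >]].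

(* The family B = { N[v] | v in V(G) } (as a set of sets: duplicates collapse) *)
Definition nbhd_family (R : realType) (V : finType) (c : V -> R * R) : {set {set V}} :=
  [set closed_nbhd c v | v : V].

Definition pos_nonclashing (V : finType) (F : {set {set V}})
    (T : {ffun {set V} -> {set V}}) : bool :=
  [forall B in F, T B \subset B] &&
  [forall B in F, forall B' in F,
     (B != B') ==> [exists w in T B :|: T B', (w \in B) != (w \in B')]].

Definition tm_size (V : finType) (F : {set {set V}}) (T : {ffun {set V} -> {set V}}) : nat :=
  (\max_(B in F) #|T B|)%N.

Lemma NCTDplus_exists (V : finType) (F : {set {set V}}) :
  exists k, [exists T, pos_nonclashing F T && (tm_size F T <= k)%N].
Proof.
exists (tm_size F [ffun B => B]); apply/existsP; exists [ffun B => B].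
rewrite leqnn andbT; apply/andP; split.
  by apply/forall_inP => B _; rewrite ffunE.
apply/forall_inP => B _; apply/forall_inP => B' _; apply/implyP => neq.
move: neq; apply: contraTT; rewrite negb_exists => /forallP H.
rewrite negbK; apply/eqP/setP => w; move: (H w); rewrite !ffunE in_setU.
by case: (w \in B); case: (w \in B').
Qed.

Definition NCTDplus (V : finType) (F : {set {set V}}) : nat :=
  ex_minn (NCTDplus_exists F).

(* Main.v *)
Require Import Defs.
From mathcomp Require Import all_boot all_order all_algebra.
From mathcomp Require Import boolp reals.
From mathcomp Require Import lra.
Set Implicit Arguments. Unset Strict Implicit. Unset Printing Implicit Defensive.
Import Order.TTheory GRing.Theory Num.Theory.
Local Open Scope ring_scope.

Lemma in_nbhd (R : realType) (V : finType) (c : V -> R * R) u v :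
  (u \in closed_nbhd c v) = (`|(c u).1 - (c v).1| <= 1) && (`|(c u).2 - (c v).2| <= 1).
Proof.
rewrite inE; apply/asboolP/andP.
- case=> [->|[_ [q [[/andP[h1 h2] /andP[h3 h4]] [/andP[h5 h6] /andP[h7 h8]]]]]].
  + by rewrite !subrr normr0 ler01.
  + rewrite !ler_norml; split; apply/andP; split; lra.
- case=> h1 h2; have [->|neq] := eqVneq u v; first by left.
  right; split; first exact/eqP.
  exists (((c u).1 + (c v).1)/2, ((c u).2 + (c v).2)/2).
  move: h1 h2; rewrite !ler_norml => /andP[h1 h1'] /andP[h2 h2'].
  rewrite /unit_square /=; split; split; apply/andP; split; lra.
Qed.

Definition pmax (R : realType) (V : finType) (f : V -> R) (B : {set V}) : option V :=
  [pick w in B | [forall u in B, f u <= f w]].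

Lemma pmax_some (R : realType) (V : finType) (f : V -> R) (B : {set V}) w :
  w \in B -> exists a, [/\ pmax f B = Some a, a \in B & f w <= f a].
Proof.
move=> wB; rewrite /pmax; case: pickP => [a /andP[aB /forall_inP H]|H].
  by exists a; split => //; apply: H.
exfalso; case: (@arg_maxP _ _ _ w (mem B) f wB) => a aB Ha.
move: (H a) => /negbT/negP; apply; apply/andP; split => //; apply/forall_inP => u uB; exact: Ha.
Qed.

Definition fs (R : realType) (V : finType) (c : V -> R * R) (i : nat) (u : V) : R :=
  match i with 0 => (c u).1 | 1 => - (c u).1 | 2 => (c u).2 | _ => - (c u).2 end.

Definition Tset (R : realType) (V : finType) (c : V -> R * R) (B : {set V}) : {set V} :=
  [set:: pmap id [seq pmax (fs c i) B | i <- iota 0 4]].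

Lemma Tset_sub (R : realType) (V : finType) (c : V -> R * R) (B : {set V}) : Tset c B \subset B.
Proof.
apply/subsetP => a; rewrite inE mem_pmap map_id => /mapP[i _].
rewrite /pmax; case: pickP => // x /andP[xB _] [->] //.
Qed.

Lemma Tset_card (R : realType) (V : finType) (c : V -> R * R) (B : {set V}) : (#|Tset c B| <= 4)%N.
Proof.
rewrite cardsE; apply: leq_trans (card_size _) _.
by rewrite size_pmap; apply: leq_trans (count_size _ _) _; rewrite size_map size_iota.
Qed.

Lemma Tset_mem (R : realType) (V : finType) (c : V -> R * R) (B : {set V}) i a :
  (i < 4)%N -> pmax (fs c i) B = Some a -> a \in Tset c B.
Proof.
move=> hi h; rewrite inE mem_pmap map_id; apply/mapP; exists i => //.
by rewrite mem_iota.
Qed.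

Lemma key (R : realType) (V : finType) (c : V -> R * R) (B : {set V}) v w :
  w \in B -> w \notin closed_nbhd c v ->
  exists a, [/\ a \in Tset c B, a \in B & a \notin closed_nbhd c v].
Proof.
move=> wB; rewrite in_nbhd negb_and -!ltNge !ltr_normr.
case/orP => /orP[] h.
- have [a [ha aB le]] := pmax_some (fs c 0) wB.
  exists a; split => //; first exact: (Tset_mem (i := 0)).
  rewrite in_nbhd !ler_norml; apply/negP => /andP[/andP[h1 h2] _]; move: le => /=; lra.
- have [a [ha aB le]] := pmax_some (fs c 1) wB.
  exists a; split => //; first exact: (Tset_mem (i := 1)).
  rewrite in_nbhd !ler_norml; apply/negP => /andP[/andP[h1 h2] _]; move: le => /=; lra.
- have [a [ha aB le]] := pmax_some (fs c 2) wB.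
  exists a; split => //; first exact: (Tset_mem (i := 2)).
  rewrite in_nbhd !ler_norml; apply/negP => /andP[_ /andP[h1 h2]]; move: le => /=; lra.
- have [a [ha aB le]] := pmax_some (fs c 3) wB.
  exists a; split => //; first exact: (Tset_mem (i := 3)).
  rewrite in_nbhd !ler_norml; apply/negP => /andP[_ /andP[h1 h2]]; move: le => /=; lra.
Qed.

Theorem theorem8 (R : realType) (V : finType) (c : V -> R * R) :
  (NCTDplus (nbhd_family c) <= 4)%N.
Proof.
rewrite /NCTDplus; case: ex_minnP => m _; apply.
apply/existsP; exists [ffun B => Tset c B]; apply/andP; split.
  apply/andP; split.
    by apply/forall_inP => B _; rewrite ffunE Tset_sub.
  apply/forall_inP => B /imsetP[u _ ->]; apply/forall_inP => B' /imsetP[v _ ->].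
  apply/implyP => neq.
  have [w hw] : exists w, (w \in closed_nbhd c u) != (w \in closed_nbhd c v).
    apply/existsP; move: neq; apply: contraNT; rewrite negb_exists => /forallP H.
    by apply/eqP/setP => w; move: (H w); rewrite negbK => /eqP.
  rewrite !ffunE.
  case wu: (w \in closed_nbhd c u) hw; case wv: (w \in closed_nbhd c v) => // _.
    have [a [aT aB aN]] := key wu (negbT wv).
    apply/existsP; exists a; rewrite in_setU aT aB /=.
    by rewrite (negbTE aN).
  have [a [aT aB aN]] := key wv (negbT wu).
  apply/existsP; exists a; rewrite in_setU aT orbT aB /=.
  by rewrite (negbTE aN).
apply/bigmax_leqP => B _; rewrite ffunE; exact: Tset_card.
Qed.
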